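(* Let $\mathbb L$ be a non-trivial finite lattice (more than one element). For every constant $D>1$ there exists a constant $D'>1$ such that there is a linear reduction from $\mathsf{Lattice\text{-}Eval}((\{0,1\};\wedge,\vee),D)$ restricted to instances with $\ell=1$ to $\mathsf{Lattice\text{-}Eval}(\mathbb L,D')$.
   Context: For a finite lattice $\mathbb L=(L;\wedge,\vee)$ and a constant $D>1$, $\mathsf{Lattice\text{-}Eval}(\mathbb L,D)$ is the assignment problem whose instances consist of: a circuit $C$ on a variable set $V$ over the basis $\{\wedge,\vee\}$ (fan-in 2) of depth less than $D+D\log_2|V|$; an element $\ell\in L$; and weights $w:V\to[0,1]$ with $\sum_x w(x)=1$. Assignments are maps $f:V\to L$; $f$ is satisfying if $C(f)\ge\ell$. $\mathrm{dist}_{\mathcal I}(f)$ is the minimum over satisfying $g$ of $\sum_{x:f(x)\ne g(x)}w(x)$. A linear reduction from assignment problem $\mathcal P$ to $\mathcal P'$: given an instance $\mathcal I$ of $\mathcal P$ with variable set $V$ and an assignment $f$, it (possibly randomly) produces an instance $\mathcal I'$ of $\mathcal P'$ with variable set $V'$, $|V'|=O(|V|)$, and an assignment $f'$ such that (i) if $f$ satisfies $\mathcal I$ then $f'$ satisfies $\mathcal I'$; (ii) there is a constant $c_1>0$ with: for every $\epsilon\in(0,1)$, if $\mathrm{dist}_{\mathcal I}(f)\ge\epsilon$ then $\Pr[\mathrm{dist}_{\mathcal I'}(f')\ge c_1\epsilon]\ge 9/10$; (iii) every value of $f'$ can be computed with at most a constant $c_2$ queries to $f$. *)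

(* Defs.v *)
From HB Require Import structures.
From mathcomp Require Import all_boot all_order.
From Stdlib Require Import Reals.

Set Implicit Arguments.
Unset Strict Implicit.
Unset Printing Implicit Defensive.

Import Order.Theory.
Local Open Scope order_scope.

(* A circuit on variable set V, given by its (tree) unfolding. *)
Inductive circuit (V : Type) : Type :=
| CVar : V -> circuit V
| CMeet : circuit V -> circuit V -> circuit V
| CJoin : circuit V -> circuit V -> circuit V.

Arguments CVar {V}.
Arguments CMeet {V}.
Arguments CJoin {V}.

Fixpoint cdepth (V : Type) (c : circuit V) : nat :=
  match c with
  | CVar _ => 0
  | CMeet c1 c2 => (maxn (cdepth c1) (cdepth c2)).+1
  | CJoin c1 c2 => (maxn (cdepth c1) (cdepth c2)).+1
  end.

Fixpoint ceval (d : Order.disp_t) (L : latticeType d) (V : Type)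
    (f : V -> L) (c : circuit V) : L :=
  match c with
  | CVar x => f x
  | CMeet c1 c2 => ceval f c1 `&` ceval f c2
  | CJoin c1 c2 => ceval f c1 `|` ceval f c2
  end.

Record instance (d : Order.disp_t) (L : finLatticeType d) (V : finType) :=
  Instance {
    icirc : circuit V;
    ilevel : L;
    iweight : V -> R
  }.

Definition log2 (x : R) : R := (ln x / ln 2)%R.

Definition lattice_eval_instance (d : Order.disp_t) (L : finLatticeType d)
    (D : R) (V : finType) (I : instance L V) : Prop :=
  (INR (cdepth (icirc I)) < D + D * log2 (INR #|V|))%R /\
  (forall x : V, 0 <= iweight I x <= 1)%R /\
  \big[Rplus/R0]_(x : V) iweight I x = R1.

Definition satisfies (d : Order.disp_t) (L : finLatticeType d) (V : finType)
    (I : instance L V) (f : V -> L) : bool :=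
  ilevel I <= ceval f (icirc I).

Definition wdist (d : Order.disp_t) (L : finLatticeType d) (V : finType)
    (I : instance L V) (f g : V -> L) : R :=
  \big[Rplus/R0]_(x : V | f x != g x) iweight I x.

(* dist_I(f) = min over satisfying g of wdist; the initial value 1 of the
   iterated minimum never matters when a satisfying g exists, since weights
   sum to 1 (and the all-top assignment is always satisfying). *)
Definition dist (d : Order.disp_t) (L : finLatticeType d) (V : finType)
    (I : instance L V) (f : V -> L) : R :=
  \big[Rmin/R1]_(g : {ffun V -> L} | satisfies I g) wdist I f g.

Inductive qtree (V A B : Type) : Type :=
| QLeaf : B -> qtree V A B
| QQuery : V -> (A -> qtree V A B) -> qtree V A B.

Arguments QLeaf {V A B}.
Arguments QQuery {V A B}.

Fixpoint qeval (V A B : Type) (f : V -> A) (t : qtree V A B) : B :=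
  match t with
  | QLeaf b => b
  | QQuery x k => qeval f (k (f x))
  end.

Inductive qdepth_le (V A B : Type) : nat -> qtree V A B -> Prop :=
| QDLeaf : forall n b, qdepth_le n (QLeaf b)
| QDQuery : forall n x k, (forall a, qdepth_le n (k a)) ->
    qdepth_le n.+1 (QQuery x k).

(* Given an instance I on V, the reduction draws a random seed s from a
   finite probability space (seed I, prob I); the output instance has
   variable set 'I_(outsize I s) and is outinst I s; the output assignment
   f' is y |-> qeval f (outassign I s y), i.e. each value f'(y) is computed
   by a query procedure on f. *)
Record reduction (d d' : Order.disp_t) (L : finLatticeType d)
    (L' : finLatticeType d') := Reduction {
  seed : forall V : finType, instance L V -> finType;
  prob : forall (V : finType) (I : instance L V), seed I -> R;
  outsize : forall (V : finType) (I : instance L V), seed I -> nat;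
  outinst : forall (V : finType) (I : instance L V) (s : seed I),
      instance L' 'I_(outsize s);
  outassign : forall (V : finType) (I : instance L V) (s : seed I),
      'I_(outsize s) -> qtree V L L'
}.

Arguments seed {d d' L L'} r {V} I.
Arguments prob {d d' L L'} r {V I} s.
Arguments outsize {d d' L L'} r {V I} s.
Arguments outinst {d d' L L'} r {V I} s.
Arguments outassign {d d' L L'} r {V I} s y.

Definition out_assignment (d d' : Order.disp_t) (L : finLatticeType d)
    (L' : finLatticeType d') (r : reduction L L') (V : finType)
    (I : instance L V) (s : seed r I) (f : V -> L) : 'I_(outsize r s) -> L' :=
  fun y => qeval f (outassign r s y).

Arguments out_assignment {d d' L L'} r {V I} s f.

Definition linear_reduction (d d' : Order.disp_t) (L : finLatticeType d)
    (L' : finLatticeType d')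
    (P : forall V : finType, instance L V -> Prop)
    (P' : forall V : finType, instance L' V -> Prop)
    (r : reduction L L') : Prop :=
  (forall (V : finType) (I : instance L V), P V I ->
     (forall s : seed r I, 0 <= prob r s)%R /\
     \big[Rplus/R0]_(s : seed r I) prob r s = R1) /\
  (forall (V : finType) (I : instance L V) (s : seed r I), P V I ->
     P' _ (outinst r s)) /\
  (exists c0 : nat, forall (V : finType) (I : instance L V) (s : seed r I),
     P V I -> outsize r s <= c0 * #|V|)%N /\
  (forall (V : finType) (I : instance L V) (s : seed r I) (f : V -> L),
     P V I -> satisfies I f -> satisfies (outinst r s) (out_assignment r s f)) /\
  (exists c1 : R, (0 < c1)%R /\
     forall (V : finType) (I : instance L V) (f : V -> L) (eps : R),
       P V I -> (0 < eps < 1)%R -> (eps <= dist I f)%R ->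
       (9 / 10 <= \big[Rplus/R0]_(s : seed r I |
                       Rle_dec (c1 * eps) (dist (outinst r s) (out_assignment r s f)))
                     prob r s)%R) /\
  (exists c2 : nat, forall (V : finType) (I : instance L V) (s : seed r I)
       (y : 'I_(outsize r s)), qdepth_le c2 (outassign r s y)).

(* Main.v *)
Require Import Defs.
From HB Require Import structures.
From mathcomp Require Import all_boot all_order.
From Stdlib Require Import Reals Lra.

Set Implicit Arguments.
Unset Strict Implicit.
Unset Printing Implicit Defensive.
Import Order.Theory.

Lemma Rplus_assoc' : associative Rplus. Proof. by move=> x y z; rewrite Rplus_assoc. Qed.
HB.instance Definition _ := Monoid.isComLaw.Build R R0 Rplus Rplus_assoc' Rplus_comm Rplus_0_l.

Fixpoint cmap (V W : Type) (h : V -> W) (c : circuit V) : circuit W :=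
  match c with
  | CVar x => CVar (h x)
  | CMeet c1 c2 => CMeet (cmap h c1) (cmap h c2)
  | CJoin c1 c2 => CJoin (cmap h c1) (cmap h c2)
  end.

Lemma cdepth_map (V W : Type) (h : V -> W) c : cdepth (cmap h c) = cdepth c.
Proof. by elim: c => //= c1 -> c2 ->. Qed.

Lemma ceval_map (d : Order.disp_t) (L : latticeType d) (V W : Type) (h : V -> W)
  (f : W -> L) c : ceval f (cmap h c) = ceval (fun x => f (h x)) c.
Proof. by elim: c => //= c1 -> c2 ->. Qed.

Lemma ceval_ext (d : Order.disp_t) (L : latticeType d) (V : Type)
  (f g : V -> L) c : (forall x, f x = g x) -> ceval f c = ceval g c.
Proof. by move=> H; elim: c => //= c1 -> c2 ->. Qed.

Lemma foldr_meet_le (d : Order.disp_t) (L : latticeType d) (x0 : L) (s : seq L) :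
  (forall y, y \in s -> (foldr Order.meet x0 s <= y)%O) /\ (foldr Order.meet x0 s <= x0)%O.
Proof.
elim: s => [|a s [IH1 IH2]] /=; first by split.
split; last by apply: le_trans IH2; exact: leIr.
move=> y; rewrite inE => /orP [/eqP -> | ys]; first exact: leIl.
by apply: le_trans (IH1 _ ys); exact: leIr.
Qed.

Lemma foldr_join_ge (d : Order.disp_t) (L : latticeType d) (x0 : L) (s : seq L) :
  (forall y, y \in s -> (y <= foldr Order.join x0 s)%O) /\ (x0 <= foldr Order.join x0 s)%O.
Proof.
elim: s => [|a s [IH1 IH2]] /=; first by split.
split; first last. by apply: le_trans IH2 _; exact: leUr.
move=> y; rewrite inE => /orP [/eqP -> | ys]; first exact: leUl.
by apply: le_trans (IH1 _ ys) _; exact: leUr.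
Qed.

Lemma bot_top (d : Order.disp_t) (L : finLatticeType d) : (1 < #|L|)%N ->
  exists bot top : L, bot != top /\ forall y, (bot <= y)%O /\ (y <= top)%O.
Proof.
move=> H.
case: (pickP (fun _ : L => true)) => [x0 _|H0]; last first.
  by move: H; rewrite (eq_card0 H0).
exists (foldr Order.meet x0 (enum L)), (foldr Order.join x0 (enum L)).
have Hb := (foldr_meet_le x0 (enum L)).1.
have Ht := (foldr_join_ge x0 (enum L)).1.
split; last by move=> y; split; [apply: Hb|apply: Ht]; rewrite mem_enum.
apply/negP => /eqP Heq.
have : forall y : L, y = x0.
  move=> y; apply/eqP; rewrite eq_le; apply/andP; split.
  - by apply: le_trans (Ht y _) _; [rewrite mem_enum|rewrite -Heq; apply: Hb; rewrite mem_enum].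
  - by apply: le_trans (Ht x0 _) _; [rewrite mem_enum|rewrite -Heq; apply: Hb; rewrite mem_enum].
move=> Hall.
have : (#|L| <= 1)%N.
  rewrite -(card1 x0); apply: subset_leq_card; apply/subsetP => y _.
  by rewrite inE (Hall y).
by rewrite leqNgt H.
Qed.

Lemma bigmin_le (T : eqType) (r : seq T) (P : pred T) (F : T -> R) x :
  x \in r -> P x -> (\big[Rmin/R1]_(i <- r | P i) F i <= F x)%R.
Proof.
elim: r => // a r IH; rewrite inE big_cons => /orP [/eqP <- -> | xr Px].
  exact: Rmin_l.
case: (P a); last exact: IH.
apply: Rle_trans (Rmin_r _ _) _; exact: IH.
Qed.

Lemma bigmin_le1 (T : Type) (r : seq T) (P : pred T) (F : T -> R) :
  (\big[Rmin/R1]_(i <- r | P i) F i <= R1)%R.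
Proof.
elim: r => [|a r IH]; rewrite ?big_nil ?big_cons; first exact: Rle_refl.
case: (P a) => //; exact: Rle_trans (Rmin_r _ _) IH.
Qed.

Lemma bigplus_le (I : Type) (r : seq I) (P : pred I) (F G : I -> R) :
  (forall i, P i -> F i <= G i)%R ->
  (\big[Rplus/R0]_(i <- r | P i) F i <= \big[Rplus/R0]_(i <- r | P i) G i)%R.
Proof.
move=> H; apply: (big_ind2 (fun a b => a <= b)%R); first exact: Rle_refl.
- by move=> ? ? ? ? ? ?; apply: Rplus_le_compat.
- exact: H.
Qed.

Lemma bigplus_ge0 (I : Type) (r : seq I) (P : pred I) (F : I -> R) :
  (forall i, P i -> 0 <= F i)%R -> (0 <= \big[Rplus/R0]_(i <- r | P i) F i)%R.
Proof.
move=> H; apply: (big_ind (fun a => 0 <= a)%R); first exact: Rle_refl.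
- by move=> ? ? ? ?; lra.
- exact: H.
Qed.

Section Red.
Variables (d : Order.disp_t) (L : finLatticeType d) (bot top : L).
Hypothesis Hbt : bot != top.
Hypothesis Hle : forall y, (bot <= y)%O /\ (y <= top)%O.

Definition phi (b : bool) : L := if b then top else bot.

Definition red : reduction bool L :=
  @Reduction _ _ bool L
    (fun V I => (unit : finType))
    (fun V I s => R1)
    (fun V I s => #|V|)
    (fun V I s => Instance (cmap (@enum_rank V) (icirc I)) top
                     (fun y => iweight I (enum_val y)))
    (fun V I s y => QQuery (enum_val y) (fun b => QLeaf (phi b))).

Lemma ceval_phi (V : Type) (f : V -> bool) c :
  ceval (fun x => phi (f x)) c = phi (ceval f c).
Proof.
elim: c => //= c1 -> c2 ->.
- case: (ceval f c1); case: (ceval f c2) => /=; rewrite ?meetxx //.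
  + by apply: meet_r; case: (Hle top).
  + by apply: meet_l; case: (Hle top).
- case: (ceval f c1); case: (ceval f c2) => /=; rewrite ?joinxx //.
  + by apply: join_l; case: (Hle top).
  + by apply: join_r; case: (Hle top).
Qed.

Lemma ceval_h (V : Type) (g : V -> L) c :
  ceval g c != bot -> ceval (fun x => g x != bot) c.
Proof.
elim: c => [x //|c1 IH1 c2 IH2|c1 IH1 c2 IH2] /= H.
- apply/andP; split.
  + apply: IH1; apply: contra H => /eqP ->; apply/eqP; apply: meet_l; by case: (Hle (ceval g c2)).
  + apply: IH2; apply: contra H => /eqP ->; apply/eqP; apply: meet_r; by case: (Hle (ceval g c1)).
- case E1: (ceval g c1 == bot).
  + case E2: (ceval g c2 == bot).
    * by move: H; rewrite (eqP E1) (eqP E2) joinxx eqxx.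
    * by apply/orP; right; apply: IH2; rewrite E2.
  + by apply/orP; left; apply: IH1; rewrite E1.
Qed.

Lemma red_linear (D : R) : (1 < D)%R ->
  linear_reduction
      (fun V I => lattice_eval_instance D I /\ ilevel I = true)
      (fun V I => lattice_eval_instance D I) red.
Proof.
move=> HD.
have Hsum : forall (V : finType) (F : V -> R) (P : pred V),
    \big[Rplus/R0]_(x | P x) F x = \big[Rplus/R0]_(y : 'I_#|V| | P (enum_val y)) F (enum_val y).
  move=> V F P; apply: reindex; apply: onW_bij; exact: enum_val_bij.
split; [|split; [|split; [|split; [|split]]]].
- move=> V I _; split=> [s|]; first by rewrite /=; lra.
  by rewrite /= big_const card_unit /= Rplus_0_r.
- move=> V I s [[H1 [H2 H3]] _]; split; [|split].
  + by rewrite /= cdepth_map card_ord.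
  + by move=> y /=; apply: H2.
  + by rewrite /= -H3 Hsum.
- by exists 1%N => V I s _; rewrite mul1n.
- move=> V I s f [_ Hl]; rewrite /satisfies /= Hl => Hs.
  rewrite ceval_map /out_assignment /=.
  rewrite (@ceval_ext _ _ _ _ (fun x => phi (f x))); last first.
    by move=> x /=; rewrite enum_rankK.
  rewrite ceval_phi; move: Hs; case: (ceval f (icirc I)) => // _; exact: lexx.
- exists R1; split; first lra.
  move=> V I f eps [[H1 [H2 H3]] Hl] Heps Hd.
  have Key : (Defs.dist I f <= Defs.dist (outinst red (tt : seed red I)) (out_assignment red (tt : seed red I) f))%R.
    rewrite {2}/Defs.dist; apply: (big_ind (fun v => Defs.dist I f <= v)%R).
    - exact: bigmin_le1.
    - by move=> a b Ha Hb; apply: Rmin_glb.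
    move=> g' Hs'.
    pose g := [ffun x => g' (enum_rank x) != bot].
    have Hg : satisfies I g.
      rewrite /satisfies Hl.
      rewrite (@ceval_ext _ _ _ _ (fun x => g' (enum_rank x) != bot)); last first.
        by move=> x; rewrite ffunE.
      suff -> : ceval (fun x => g' (enum_rank x) != bot) (icirc I) = true by []. apply/idP; apply: ceval_h; apply/negP => /eqP Hb.
      move: Hs'; rewrite /satisfies /= ceval_map Hb => Htb.
      move/negP: Hbt; apply; rewrite eq_le Htb andbT; by case: (Hle top).
    have Hm := @bigmin_le _ (index_enum {ffun V -> bool}) (fun g0 : {ffun V -> bool} => satisfies I g0) (fun g0 : {ffun V -> bool} => wdist I f g0) g (mem_index_enum _) Hg. rewrite /Defs.dist. apply: Rle_trans Hm _.
    rewrite /wdist Hsum big_mkcond [X in (_ <= X)%R]big_mkcond.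
    apply: bigplus_le => y _.
    have Hw := H2 (enum_val y).
    rewrite /= ffunE enum_valK /out_assignment /=.
    have Himp : (f (enum_val y) != (g' y != bot)) -> (phi (f (enum_val y)) != g' y).
      rewrite /phi; case: (f (enum_val y)); case E: (g' y == bot) => //= _.
      - by rewrite (eqP E) eq_sym.
      - by rewrite eq_sym E.
    case: ifP => C1; first by rewrite (Himp C1); apply: Rle_refl.
    by case: ifP => _; [case: Hw | apply: Rle_refl].
  rewrite big_mkcond (big_pred1 tt); last by case.
  case: Rle_dec => Hc /=; first lra.
  exfalso; apply: Hc; rewrite Rmult_1_l; exact: Rle_trans Hd Key.
- exists 1%N => V I s y /=; apply: QDQuery => a; exact: QDLeaf.
Qed.
End Red.

Theorem mainTheorem14 :
  forall (d : Order.disp_t) (L : finLatticeType d), (1 < #|L|)%N ->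
  forall D : R, (1 < D)%R ->
  exists D' : R, (1 < D')%R /\
  exists r : reduction bool L,
    linear_reduction
      (fun V I => lattice_eval_instance D I /\ ilevel I = true)
      (fun V I => lattice_eval_instance D' I)
      r.
Proof.
move=> d L HL D HD.
have [bot [top [Hbt Hle]]] := bot_top HL.
exists D; split => //; exists (red bot top); exact: red_linear.
Qed.
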